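(* A function $f:\mathbb{N}\to\mathbb{N}$ is obliviously-computable if and only if $f$ is semilinear and nondecreasing.
   Context: A chemical reaction network (CRN) is a pair $(\mathcal{S},\mathcal{R})$ of a finite set of species and a finite set of reactions $(\vec{R},\vec{P})\in\mathbb{N}^{\mathcal{S}}\times\mathbb{N}^{\mathcal{S}}$. A configuration is $\vec{C}\in\mathbb{N}^{\mathcal{S}}$; a reaction is applicable if $\vec{R}\le\vec{C}$ and yields $\vec{C}-\vec{R}+\vec{P}$; reachability is via finite sequences of applicable reactions. To compute $f:\mathbb{N}\to\mathbb{N}$ the CRN has an input species $X$, output species $Y$, leader species $L$; the initial configuration for input $x$ has $x$ copies of $X$, one $L$, nothing else. $\vec{C}$ is stable if all configurations reachable from it have the same count of $Y$. The CRN stably computes $f$ if for every input $x$ and every $\vec{C}$ reachable from the initial configuration, some stable $\vec{O}$ reachable from $\vec{C}$ has $\vec{O}(Y)=f(x)$. The CRN is output-oblivious if $Y$ is never a reactant ($\vec{R}(Y)=0$ for all reactions). $f$ is obliviously-computable if stably computed by an output-oblivious CRN. A set $S\subseteq\mathbb{N}^d$ is semilinear if it is a finite Boolean combination of threshold sets $\{\vec{x}:\vec{a}\cdot\vec{x}\ge b\}$ ($\vec{a}\in\mathbb{Z}^d,b\in\mathbb{Z}$) and mod sets $\{\vec{x}:\vec{a}\cdot\vec{x}\equiv b\bmod c\}$ ($c\in\mathbb{N}_+$). A function is semilinear if it is a finite union of affine partial functions whose domains are disjoint semilinear sets. *)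

(* Defs.v *)
From mathcomp Require Import all_boot all_order all_algebra.
Set Implicit Arguments. Unset Strict Implicit. Unset Printing Implicit Defensive.
Import Order.TTheory GRing.Theory Num.Theory.

Record crn := CRN {
  species : finType;
  reactions : seq ({ffun species -> nat} * {ffun species -> nat});
  X_sp : species;
  Y_sp : species;
  L_sp : species
}.

Definition config (C : crn) := {ffun species C -> nat}.

Definition applicable (C : crn) (r : config C * config C) (c : config C) : bool :=
  [forall s, r.1 s <= c s].

Definition apply_rxn (C : crn) (r : config C * config C) (c : config C) : config C :=
  [ffun s => c s - r.1 s + r.2 s].

Definition step (C : crn) (c d : config C) : Prop :=
  exists2 r, r \in reactions C & applicable r c /\ d = apply_rxn r c.

Inductive reachable (C : crn) : config C -> config C -> Prop :=
| reach_refl c : reachable c c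
| reach_step c d e : step c d -> reachable d e -> reachable c e.

Definition init_config (C : crn) (x : nat) : config C :=
  [ffun s => if s == X_sp C then x else if s == L_sp C then 1 else 0].

Definition stable_config (C : crn) (c : config C) : Prop :=
  forall d, reachable c d -> d (Y_sp C) = c (Y_sp C).

Definition stably_computes (C : crn) (f : nat -> nat) : Prop :=
  forall x (c : config C), reachable (init_config C x) c ->
    exists o : config C, [/\ reachable c o, stable_config o & o (Y_sp C) = f x].

Definition output_oblivious (C : crn) : Prop :=
  forall r, r \in reactions C -> r.1 (Y_sp C) = 0.

Definition well_formed_crn (C : crn) : Prop :=
  [/\ X_sp C != Y_sp C, X_sp C != L_sp C & Y_sp C != L_sp C].

Definition obliviously_computable (f : nat -> nat) : Prop :=
  exists C : crn, [/\ well_formed_crn C, output_oblivious C & stably_computes C f].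

(* finite Boolean combinations of threshold sets and mod sets *)
Inductive sl_form :=
| SLThr of int & int
| SLMod of int & int & nat
| SLNot of sl_form
| SLAnd of sl_form & sl_form
| SLOr  of sl_form & sl_form.

Fixpoint sl_wf (F : sl_form) : bool :=
  match F with
  | SLThr _ _ => true
  | SLMod _ _ c => 0 < c
  | SLNot G => sl_wf G
  | SLAnd G H | SLOr G H => sl_wf G && sl_wf H
  end.

Fixpoint sl_mem (F : sl_form) (x : nat) : bool :=
  match F with
  | SLThr a b => (b <= a * x%:Z)%R
  | SLMod a b c => (a * x%:Z == b %[mod c%:Z])%Z
  | SLNot G => ~~ sl_mem G x
  | SLAnd G H => sl_mem G x && sl_mem H x
  | SLOr G H => sl_mem G x || sl_mem H x
  end.

Definition semilinear_set (A : nat -> Prop) : Prop :=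
  exists F, sl_wf F /\ forall x, A x <-> sl_mem F x.

Definition semilinear_fun (f : nat -> nat) : Prop :=
  exists (n : nat) (D : 'I_n -> nat -> Prop) (a b : 'I_n -> rat),
    [/\ forall i, semilinear_set (D i),
        forall i j x, D i x -> D j x -> i = j,
        forall x, exists i, D i x
      & forall i x, D i x -> ((f x)%:R = a i * x%:R + b i :> rat)%R].

Definition nondecreasing_fun (f : nat -> nat) : Prop :=
  forall m n, m <= n -> f m <= f n.

(* Main.v *)
Require Import Defs.
From mathcomp Require Import all_boot all_order all_algebra.
From mathcomp Require Import zify.
From Stdlib Require Import Classical ClassicalEpsilon.
Set Implicit Arguments. Unset Strict Implicit. Unset Printing Implicit Defensive.

Lemma build (R : nat -> nat -> Prop) : (forall m, exists n, m < n /\ R m n) ->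
  exists t : nat -> nat, (forall n, t n < t n.+1 /\ R (t n) (t n.+1)) /\ R 0 (t 0).
Proof.
move=> h.
have h' : forall m, exists n, m < n /\ R m n by [].
pose g m := proj1_sig (constructive_indefinite_description _ (h' m)).
have gP : forall m, m < g m /\ R m (g m).
  by move=> m; rewrite /g; case: constructive_indefinite_description.
exists (fun n => iter n.+1 g 0); split; last exact: (proj2 (gP 0)).
by move=> n; exact: (gP (iter n.+1 g 0)).
Qed.

Lemma incr_mono (t : nat -> nat) : (forall n, t n < t n.+1) -> forall m n, m < n -> t m < t n.
Proof.
move=> h m n; elim: n => // n IH; rewrite ltnS leq_eqVlt => /orP [/eqP ->|/IH]; first exact: h.
move=> lt; exact: ltn_trans lt (h n).
Qed.

Lemma sub1 (u : nat -> nat) : exists t : nat -> nat, (forall n, t n < t n.+1) /\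
  ((forall n, u (t n) = u (t 0)) \/ (forall n, u (t n) < u (t n.+1))).
Proof.
case: (classic (exists v, forall N, exists n, N <= n /\ u n = v)) => [[v hv]|hn].
  have [t [ht h0]] := build (R := fun _ n => u n = v) (fun m => hv m.+1).
  exists t; split; first by move=> n; case: (ht n).
  left => n; case: n => [|n] //; by case: (ht n) => _ ->.
have hB : forall B, exists N, forall n, N <= n -> B < u n.
  elim=> [|B [N IH]].
  - have [N hN] : exists N, forall n, N <= n -> u n <> 0.
      apply: NNPP => H; apply: hn; exists 0 => N; apply: NNPP => H2; apply: H; exists N.
      by move=> n hn' e; apply: H2; exists n.
    by exists N => n /hN; case: (u n).
  - have [N2 hN] : exists N, forall n, N <= n -> u n <> B.+1.
      apply: NNPP => H; apply: hn; exists B.+1 => N0; apply: NNPP => H2; apply: H; exists N0.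
      by move=> n hn' e; apply: H2; exists n.
    exists (maxn N N2) => n hle.
    have := IH n (leq_trans (leq_maxl _ _) hle); have := hN n (leq_trans (leq_maxr _ _) hle); lia.
have [t [ht h0]] := build (R := fun m n => u m < u n) (fun m =>
   let: ex_intro N hN := hB (u m) in ex_intro _ (maxn N m.+1) (conj (leq_maxr _ _) (hN _ (leq_maxl _ _)))).
exists t; split; first by move=> n; case: (ht n).
by right => n; case: (ht n).
Qed.

Definition goodc (V : finType) (a : nat -> {ffun V -> nat}) (t : nat -> nat) (v : V) :=
  (forall n, a (t n) v = a (t 0) v) \/ (forall n, a (t n) v < a (t n.+1) v).

Lemma goodc_comp (V : finType) (a : nat -> {ffun V -> nat}) t s v :
  (forall n, s n < s n.+1) -> goodc a t v -> goodc a (t \o s) v.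
Proof.
move=> hs [h|h]; [left|right] => n /=; first by rewrite !h.
exact: (incr_mono (t := fun k => a (t k) v) h (hs n)).
Qed.

Lemma subseq_coord (V : finType) (a : nat -> {ffun V -> nat}) :
  exists t : nat -> nat, (forall n, t n < t n.+1) /\ forall v, goodc a t v.
Proof.
suff H : forall l : seq V, exists t : nat -> nat, (forall n, t n < t n.+1) /\ forall v, v \in l -> goodc a t v.
  have [t [h1 h2]] := H (enum V); exists t; split => // v; apply: h2; by rewrite mem_enum.
elim=> [|v l [t [h1 h2]]]; first by exists id.
have [s [hs hg]] := sub1 (fun n => a (t n) v).
exists (t \o s); split.
  move=> n /=; exact: (incr_mono (t := t) h1 (hs n)).
move=> w; rewrite inE => /orP [/eqP ->|wl]; first by [].
exact: goodc_comp (h2 _ wl).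
Qed.

Section Gen.
Variable C : crn.
Local Notation cf := (config C).
Local Notation Y := (Y_sp C).
Local Notation X := (X_sp C).

Definition addc (c w : cf) : cf := [ffun s => c s + w s].
Definition subc (c w : cf) : cf := [ffun s => c s - w s].
Definition nX (k : nat) : cf := [ffun s => if s == X then k else 0].
Definition lec (c d : cf) := forall s, c s <= d s.

Lemma reach_trans (a b c : cf) : reachable a b -> reachable b c -> reachable a c.
Proof. elim=> // x y z st _ IH /IH; exact: reach_step. Qed.

Lemma step_shift (c d w : cf) : step c d -> step (addc c w) (addc d w).
Proof.
case=> r rin [/forallP app ->]; exists r => //; split.
  by apply/forallP => s; rewrite ffunE; apply: leq_trans (app s) (leq_addr _ _).
apply/ffunP => s; rewrite !ffunE; have := app s; lia.
Qed.

Lemma reach_shift (c d w : cf) : reachable c d -> reachable (addc c w) (addc d w).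
Proof.
elim=> [x|x y z st _ IH]; first exact: reach_refl.
exact: reach_step (step_shift w st) IH.
Qed.

Lemma addcA (a b c : cf) : addc (addc a b) c = addc a (addc b c).
Proof. by apply/ffunP => s; rewrite !ffunE addnA. Qed.

Lemma addc0 (a : cf) : addc a (nX 0) = a.
Proof. by apply/ffunP => s; rewrite !ffunE; case: ifP; rewrite addn0. Qed.

Lemma nXD m n : addc (nX m) (nX n) = nX (m + n).
Proof. by apply/ffunP => s; rewrite !ffunE; case: ifP. Qed.

Lemma init_add x k : addc (init_config C x) (nX k) = init_config C (x + k).
Proof. by apply/ffunP => s; rewrite !ffunE; case: ifP => //; case: ifP. Qed.

Hypothesis oo : output_oblivious C.

Lemma step_Y (c d : cf) : step c d -> c Y <= d Y.
Proof. case=> r rin [_ ->]; rewrite ffunE (oo rin); lia. Qed.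

Lemma reach_Y (c d : cf) : reachable c d -> c Y <= d Y.
Proof. elim=> // x y z /step_Y h _ h2; exact: leq_trans h h2. Qed.

Variable f : nat -> nat.
Hypothesis sc : stably_computes C f.

Lemma uniq_out x (c : cf) : reachable (init_config C x) c -> stable_config c -> c Y = f x.
Proof.
move=> r st; have [o [ro so <-]] := sc r. by rewrite (st _ ro).
Qed.

Lemma ub_out x (c e : cf) : reachable (init_config C x) c -> reachable c e -> e Y <= f x.
Proof.
move=> r1 r2; have [o [ro so <-]] := sc (reach_trans r1 r2). exact: reach_Y.
Qed.

Lemma stable_down (c e : cf) : lec e c -> stable_config c -> stable_config e.
Proof.
move=> le st d red.
have eq : addc e (subc c e) = c.
  by apply/ffunP => s; rewrite !ffunE; have := le s; lia.
have := reach_shift (subc c e) red; rewrite eq => /st.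
rewrite !ffunE; have := le Y; lia.
Qed.

Lemma exo : forall x (c : cf), exists o : cf, reachable (init_config C x) c ->
   [/\ reachable c o, stable_config o & o Y = f x].
Proof.
move=> x c; case: (classic (reachable (init_config C x) c)) => h.
  by have [o H] := sc h; exists o.
by exists c.
Qed.

Definition gch x c := proj1_sig (constructive_indefinite_description _ (exo x c)).
Lemma gchP x c : reachable (init_config C x) c ->
   [/\ reachable c (gch x c), stable_config (gch x c) & (gch x c) Y = f x].
Proof. rewrite /gch; case: constructive_indefinite_description => o /= H; exact: H. Qed.

Fixpoint dch (x : nat) : cf :=
  match x with 0 => gch 0 (init_config C 0)
  | x'.+1 => gch x'.+1 (addc (dch x') (nX 1)) end.

Lemma dchP x : [/\ reachable (init_config C x) (dch x), stable_config (dch x) & (dch x) Y = f x].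
Proof.
elim: x => [|x [r s e]] /=.
  by have [] := gchP (reach_refl (init_config C 0)); split => //; apply: reach_refl.
have r1 : reachable (init_config C x.+1) (addc (dch x) (nX 1)).
  by rewrite -addn1 -init_add; apply: reach_shift.
by have [] := gchP r1; split => //; apply: reach_trans r1 _.
Qed.

Lemma dch_chain x k : reachable (addc (dch x) (nX k)) (dch (x + k)).
Proof.
elim: k => [|k IH]; first by rewrite addc0 addn0; apply: reach_refl.
have r1 : reachable (init_config C (x + k)) (addc (dch (x+k)) (nX 0)) by rewrite addc0; case: (dchP (x+k)).
rewrite addnS /=.
have h2 : reachable (addc (dch x) (nX k.+1)) (addc (dch (x + k)) (nX 1)).
  by rewrite -addn1 -nXD -addcA; apply: reach_shift.
apply: reach_trans h2 _.
have r3 : reachable (init_config C (x + k).+1) (addc (dch (x + k)) (nX 1)).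
  by rewrite -addn1 -init_add; apply: reach_shift; case: (dchP (x+k)).
by case: (gchP r3).
Qed.

Lemma f_nondec : nondecreasing_fun f.
Proof.
apply: (homo_leq (r := leq)) => //; first exact: leq_trans.
move=> x; case: (dchP x) => r _ e.
have r3 : reachable (init_config C x.+1) (addc (dch x) (nX 1)).
  by rewrite -addn1 -init_add; apply: reach_shift.
have := ub_out r3 (reach_refl _); rewrite ffunE e; lia.
Qed.

End Gen.

Lemma evconst (h : nat -> nat) B : (forall m, h m <= h m.+1) -> (forall m, h m <= B) ->
  exists M, forall m, M <= m -> h m = h M.
Proof.
move=> hi hb; have hk := leqnn (B - h 0); move: {2}(B - h 0) hk => k hk.
elim: k h hi hb hk => [|k IH] h hi hb hk.
  exists 0 => m _; have := hb m; have := hb 0.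
  have : h 0 <= h m by apply: (homo_leq (r := leq)) => //; exact: leq_trans.
  lia.
case: (classic (exists m, h 0 < h m)) => [[m hm]|hn].
  have hmono : forall a b, a <= b -> h a <= h b.
    by apply: (homo_leq (r := leq)) => //; exact: leq_trans.
  have [M HM] := IH (fun n => h (m + n)) (fun n => ltac:(rewrite /= addnS; exact: hi)) (fun n => hb _)
     ltac:(rewrite /= addn0; have := hb m; lia).
  exists (m + M) => n le; have := HM (n - m); rewrite subnKC; last lia.
  by move=> ->; lia.
exists 0 => m _; have : h 0 <= h m by apply: (homo_leq (r := leq)) => //; exact: leq_trans.
have : ~ h 0 < h m by move=> H; apply: hn; exists m.
lia.
Qed.

Lemma evconst_all (h : nat -> nat -> nat) B p : (forall r m, r < p -> h r m <= h r m.+1) ->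
  (forall r m, r < p -> h r m <= B) ->
  exists M, forall r m, r < p -> M <= m -> h r m = h r M.
Proof.
move=> hi hb; elim: p hi hb => [|p IH] hi hb; first by exists 0.
have [M1 H1] := IH (fun r m l => hi r m (ltnW l)) (fun r m l => hb r m (ltnW l)).
have [M2 H2] := evconst (h := h p) (B := B) (fun m => hi p m (ltnSn p)) (fun m => hb p m (ltnSn p)).
exists (maxn M1 M2) => r m; rewrite ltnS leq_eqVlt => /orP [/eqP ->|lt] le.
  by rewrite H2 ?[h p (maxn M1 M2)]H2 //; lia.
by rewrite H1 ?[h r (maxn M1 M2)]H1 //; lia.
Qed.

Definition EP (f : nat -> nat) := exists N p q, 0 < p /\ forall z, N <= z -> f (z + p) = f z + q.

Section Fwd.
Variable C : crn.
Hypothesis oo : output_oblivious C.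
Variable f : nat -> nat.
Hypothesis sc : stably_computes C f.
Local Notation Y := (Y_sp C).

Definition mulc (m : nat) (w : config C) : config C := [ffun s => m * w s].

Lemma fwd_EP : EP f.
Proof.
have [t [ht hg]] := subseq_coord (fun n => dch sc n).
pose x0 := t 0; pose x1 := t 1.
pose c0 := dch sc x0; pose c1 := dch sc x1.
have le01 : forall s, c0 s <= c1 s.
  move=> s; case: (hg s) => h; first by rewrite /c1 /x1 (h 1).
  exact: ltnW (h 0).
pose D := subc c1 c0.
pose E := fun m => addc c0 (mulc m D).
have hp : x0 < x1 := ht 0.
pose p := x1 - x0.
have Est : forall m, stable_config (E m).
  move=> m; pose M := \max_s D s.
  have hDM : forall s, D s <= M by move=> s; exact: leq_bigmax.
  have grow : forall s, (forall n, dch sc (t n) s < dch sc (t n.+1) s) ->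
      forall n, dch sc (t 0) s + n <= dch sc (t n) s.
    move=> s h; elim=> [|n IH]; first by rewrite addn0.
    by rewrite addnS; apply: leq_ltn_trans IH (h n).
  apply: (stable_down (c := dch sc (t (m * M)))); last by case: (dchP sc (t (m * M))).
  move=> s; rewrite /E !ffunE; case: (hg s) => h.
    have D0 : D s = 0 by rewrite /D ffunE /c1 /c0 /x1 /x0 (h 1) subnn.
    move: D0; rewrite /D ffunE => ->; by rewrite muln0 addn0 /c0 /x0 (h (m * M)).
  have := grow s h (m * M); have := hDM s; rewrite /c0 /x0 /D ffunE => h1 h2.
  apply: leq_trans h2; rewrite leq_add2l; exact: leq_mul.
have Ereach1 : forall m, reachable (addc (E m) (nX C p)) (E m.+1).
  move=> m; have := reach_shift (mulc m D) (dch_chain sc x0 p).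
  have -> : x0 + p = x1 by rewrite /p; lia.
  have e1 : addc (addc (dch sc x0) (nX C p)) (mulc m D) = addc (E m) (nX C p).
    by apply/ffunP => s; rewrite /E /c0 !ffunE; lia.
  have e2 : addc (dch sc x1) (mulc m D) = E m.+1.
    by apply/ffunP => s; rewrite /E /D /c0 /c1 !ffunE mulSn; have := le01 s; rewrite /c0 /c1; lia.
  by rewrite e1 e2.
have Ereach : forall m, reachable (init_config C (x0 + m * p)) (E m).
  elim => [|m IH].
    have -> : E 0 = c0 by apply/ffunP => s; rewrite !ffunE mul0n addn0.
    by rewrite mul0n addn0; case: (dchP sc x0).
  have := reach_shift (nX C p) IH; rewrite init_add => h; have := reach_trans h (Ereach1 m).
  by have -> : x0 + m.+1 * p = x0 + m * p + p by rewrite mulSn; lia.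
pose q := f x1 - f x0.
have fE : forall m, f (x0 + m * p) = f x0 + m * q.
  move=> m; rewrite -(uniq_out sc (Ereach m) (Est m)) /E !ffunE.
  by case: (dchP sc x0) => _ _ ->; case: (dchP sc x1) => _ _ ->.
have fnd := f_nondec oo sc.
pose h := fun r m => f (x0 + m * p + r) - f (x0 + m * p).
have hinc : forall r m, r < p -> h r m <= h r m.+1.
  move=> r m _.
  have R1 : reachable (init_config C (x0 + m * p + r)) (addc (E m) (nX C r)).
    by rewrite -init_add; apply: reach_shift.
  have [R2 S2 Y2] := gchP sc R1.
  have R3 := reach_shift D R2.
  have eq3 : addc (addc (E m) (nX C r)) D = addc (E m.+1) (nX C r).
    by apply/ffunP => s; rewrite !ffunE mulSn; lia.
  have R4 : reachable (init_config C (x0 + m.+1 * p + r)) (addc (E m.+1) (nX C r)).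
    by rewrite -init_add; apply: reach_shift.
  rewrite eq3 in R3.
  have := ub_out oo sc R4 R3; rewrite ffunE Y2 /h.
  have -> : D Y = q by rewrite /D ffunE; case: (dchP sc x0) => _ _ ->; case: (dchP sc x1) => _ _ ->.
  rewrite !fE mulSn.
  have : f (x0 + m * p) <= f (x0 + m * p + r) by apply: fnd; lia.
  rewrite fE; lia.
have hbd : forall r m, r < p -> h r m <= q.
  move=> r m rp; rewrite /h.
  have : f (x0 + m * p + r) <= f (x0 + m.+1 * p) by apply: fnd; rewrite mulSn; lia.
  rewrite !fE mulSn; lia.
have [M HM] := evconst_all hinc hbd.
exists (x0 + M * p), p, q; split; first by rewrite /p; lia.
move=> z hz.
have pp : 0 < p by rewrite /p; lia.
pose m := (z - x0) %/ p; pose r := (z - x0) %% p.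
have dq := divn_eq (z - x0) p.
have zeq : z = x0 + m * p + r by rewrite /m /r; lia.
have rp : r < p by rewrite /r ltn_mod.
have mM : M <= m.
  rewrite leqNgt; apply/negP => lt.
  have : m.+1 * p <= M * p by rewrite leq_mul2r lt orbT.
  rewrite mulSn; lia.
have e1 := HM r m rp mM; have e2 := HM r m.+1 rp (leqW mM).
have f1 : f (x0 + m * p) <= f (x0 + m * p + r) by apply: fnd; lia.
have f2 : f (x0 + m.+1 * p) <= f (x0 + m.+1 * p + r) by apply: fnd; lia.
rewrite /h in e1 e2.
have -> : z + p = x0 + m.+1 * p + r by rewrite zeq mulSn; lia.
rewrite zeq; move: e1 e2 f1 f2; rewrite !fE mulSn; lia.
Qed.

End Fwd.
Import GRing.Theory Num.Theory.
From mathcomp Require Import ring.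

Lemma EP_iter (f : nat -> nat) N p q : (forall z, N <= z -> f (z + p) = f z + q) ->
  forall z k, N <= z -> f (z + k * p) = f z + k * q.
Proof.
move=> h z k hz; elim: k => [|k IH]; first by rewrite !mul0n !addn0.
have -> : z + k.+1 * p = (z + k * p) + p by rewrite mulSn; lia.
rewrite h ?IH ?mulSn; lia.
Qed.

Lemma EP_semilinear (f : nat -> nat) : EP f -> semilinear_fun f.
Proof.
case=> N [p [q [pp hf]]].
pose D := fun (i : 'I_(N + p)) (x : nat) => if i < N then x = i else (N <= x /\ (x - N) %% p = i - N).
pose a := fun (i : 'I_(N + p)) => if i < N then 0%R else ((q%:R / p%:R) : rat)%R.
pose b := fun (i : 'I_(N + p)) => if i < N then ((f i)%:R : rat) else ((f i)%:R - a i * i%:R)%R.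
exists (N + p), D, a, b; split.
- move=> i; rewrite /D; case hi: (i < N).
    exists (SLAnd (SLThr 1 i) (SLThr (-1) (- i%:Z))); split => // x /=.
    by split; [move=> ->; apply/andP; split; lia | move/andP => [h1 h2]; lia].
  exists (SLAnd (SLThr 1 N) (SLMod 1 i p)); split; first by rewrite /= pp.
  move=> x /=; rewrite mul1r !modz_nat eqz_nat.
  have hi1 : N <= i by rewrite leqNgt hi.
  have hi2 : i - N < p by have := ltn_ord i; lia.
  split.
    move=> [hx e]; apply/andP; split; first lia.
    by rewrite -(subnKC hx) -(subnKC hi1) eqn_modDl e (modn_small hi2).
  move/andP => [hx e]; split; first lia.
  have : (N + (x - N) == N + (i - N) %[mod p]) by rewrite !subnKC.
  by rewrite eqn_modDl (modn_small hi2) => /eqP.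
- move=> i j x; rewrite /D; case: ifP => hi; case: ifP => hj.
  + by move=> -> /val_inj.
  + by move=> -> [hx _]; move: hx; rewrite leqNgt hi.
  + by move=> [hx _] e; move: hx; rewrite e leqNgt hj.
  + move=> [_ e1] [_ e2]; apply: val_inj => /=; move: e1 e2 => -> ei.
    have hi1 : N <= i by rewrite leqNgt hi.
    have hj1 : N <= j by rewrite leqNgt hj.
    lia.
- move=> x; case: (ltnP x N) => hx.
    have hxn : x < N + p by lia.
    by exists (Ordinal hxn); rewrite /D /= hx.
  have hxn : N + (x - N) %% p < N + p by rewrite ltn_add2l ltn_mod.
  exists (Ordinal hxn); rewrite /D /=.
  have -> : (N + (x - N) %% p < N) = false by lia.
  by split => //; rewrite addKn.
- move=> i x; rewrite /D /a /b; case: ifP => hi.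
    by move=> ->; rewrite mul0r add0r.
  move=> [hx e].
  have hi1 : N <= i by rewrite leqNgt hi.
  have xe : x = i + (x - N) %/ p * p.
    have := divn_eq (x - N) p; rewrite e; lia.
  rewrite xe (EP_iter hf) // !natrD !natrM /a hi; field.
  by rewrite pnatr_eq0 -lt0n.
Qed.
Import GRing.Theory Num.Theory.
From mathcomp Require Import ring.

Definition evper (g : nat -> bool) N P := 0 < P /\ forall x, N <= x -> g (x + P) = g x.

Lemma evper_mul g N P k : evper g N P -> 0 < k -> evper g N (k * P).
Proof.
case=> pp h kp; split; first by rewrite muln_gt0 kp.
move=> x hx; elim: (k) => [|j IH]; first by rewrite mul0n addn0.
have -> : x + j.+1 * P = (x + j * P) + P by rewrite mulSn; lia.
rewrite h ?IH //; lia.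
Qed.

Lemma evper_mono g N N' P : evper g N P -> N <= N' -> evper g N' P.
Proof. by case=> pp h le; split => // x hx; apply: h; lia. Qed.

Lemma sl_ep F : sl_wf F -> exists N P, evper (sl_mem F) N P.
Proof.
elim: F => [a b|a b c|G IH|G IHG H IHH|G IHG H IHH] /=.
- exists (absz b).+1, 1; split => // x hx.
  have [a0|a0|->] := ltrgtP a 0; last by rewrite !mul0r.
  + have h1 : forall y : nat, (absz b < y)%N -> (b <= a * y%:Z)%R = false.
      move=> y hy; apply/negbTE/negP => Hc; nia.
    by rewrite !h1 //; lia.
  + have h1 : forall y : nat, (absz b < y)%N -> (b <= a * y%:Z)%R.
      move=> y hy. nia.
    by rewrite !h1 //; lia.
- move=> cp; exists 0, c; split => // x _.
  by rewrite PoszD mulrDr [(a * x%:Z + _)%R]addrC modzMDl.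
- move=> /IH [N [P [pp h]]]; exists N, P; split => // x hx; by rewrite h.
- move=> /andP [/IHG [N1 [P1 h1]] /IHH [N2 [P2 h2]]].
  have [pp1 _] := h1; have [pp2 _] := h2.
  exists (maxn N1 N2), (P2 * P1); split; first by rewrite muln_gt0 pp1 pp2.
  have [_ k1] := evper_mono (evper_mul h1 pp2) (leq_maxl N1 N2).
  have [_ k2] := evper_mono (evper_mul h2 pp1) (leq_maxr N1 N2).
  by move=> x hx; rewrite k1 // mulnC k2.
- move=> /andP [/IHG [N1 [P1 h1]] /IHH [N2 [P2 h2]]].
  have [pp1 _] := h1; have [pp2 _] := h2.
  exists (maxn N1 N2), (P2 * P1); split; first by rewrite muln_gt0 pp1 pp2.
  have [_ k1] := evper_mono (evper_mul h1 pp2) (leq_maxl N1 N2).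
  have [_ k2] := evper_mono (evper_mul h2 pp1) (leq_maxr N1 N2).
  by move=> x hx; rewrite k1 // mulnC k2.
Qed.

Lemma sl_EP (f : nat -> nat) : semilinear_fun f -> nondecreasing_fun f -> EP f.
Proof.
case=> n [D [a [b [hs hd hc hv]]]] nd.
have H : forall i, exists NP : nat * nat, 0 < NP.2 /\ forall x, NP.1 <= x -> (D i (x + NP.2) <-> D i x).
  move=> i; have [F [wf hF]] := hs i; have [N [P [pp hP]]] := sl_ep wf.
  exists (N, P); split => // x hx /=.
  by rewrite !hF hP.
pose g i := proj1_sig (constructive_indefinite_description _ (H i)).
have gP : forall i, 0 < (g i).2 /\ forall x, (g i).1 <= x -> (D i (x + (g i).2) <-> D i x).
  by move=> i; rewrite /g; case: constructive_indefinite_description.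
pose N := \max_i (g i).1.
pose P := \prod_i (g i).2.
have Pp : 0 < P by apply: prodn_gt0 => i; case: (gP i).
have Pi : forall i, exists k, P = k * (g i).2.
  by move=> i; exists (\prod_(j | j != i) (g j).2); rewrite /P (bigD1 i) //= mulnC.
have Dper : forall i x, N <= x -> D i x -> D i (x + P).
  move=> i x hx; have [k ->] := Pi i; have [_ h] := gP i.
  have hx' : (g i).1 <= x by apply: leq_trans hx; exact: leq_bigmax.
  elim: k => [|k IH]; first by rewrite mul0n addn0.
  move=> dx; have -> : x + k.+1 * (g i).2 = (x + k * (g i).2) + (g i).2 by rewrite mulSn; lia.
  apply/(h _ _).2; [lia | exact: IH].
pose s x := f (x + P) - f x.
have sR : forall i x, N <= x -> D i x -> ((s x)%:R = a i * P%:R :> rat)%R.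
  move=> i x hx dx; rewrite /s natrB; last by apply: nd; lia.
  by rewrite (hv i _ (Dper i x hx dx)) (hv i x dx) natrD; ring.
have sper : forall x, N <= x -> s (x + P) = s x.
  move=> x hx; have [i dx] := hc x.
  apply/eqP; rewrite -(eqr_nat rat) (sR i x hx dx) (sR i (x + P)) //; last exact: Dper.
  lia.
have fk : forall x k, N <= x -> f (x + k * P) = f x + k * s x.
  move=> x k hx; elim: k => [|k IH]; first by rewrite !mul0n !addn0.
  have sk : s (x + k * P) = s x.
    elim: (k) => [|j IHj]; first by rewrite mul0n addn0.
    have -> : x + j.+1 * P = (x + j * P) + P by rewrite mulSn; lia.
    rewrite sper ?IHj //; lia.
  have -> : x + k.+1 * P = (x + k * P) + P by rewrite mulSn; lia.
  have : f (x + k * P) <= f (x + k * P + P) by apply: nd; lia.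
  move=> le; have sk' : f (x + k * P + P) = f (x + k * P) + s x by rewrite -sk /s; lia.
  by rewrite sk' IH mulSn; lia.
have s1 : forall x, N <= x -> s x.+1 = s x.
  move=> x hx.
  have A : forall k, f x + k * s x <= f x.+1 + k * s x.+1.
    move=> k; rewrite -(fk x k hx) -(fk x.+1 k); last lia.
    by apply: nd; lia.
  have B : forall k, f x.+1 + k * s x.+1 <= f x + k.+1 * s x.
    move=> k; rewrite -(fk x k.+1 hx) -(fk x.+1 k); last lia.
    by apply: nd; rewrite mulSn; lia.
  have f01 : f x <= f x.+1 by apply: nd.
  case: (ltngtP (s x.+1) (s x)) => // lt.
    have := A (f x.+1).+1; nia.
  have := B (f x + s x).+1; nia.
have sN : forall x, N <= x -> s x = s N.
  move=> x hx; rewrite -(subnKC hx); elim: (x - N) => [|k IH]; first by rewrite addn0.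
  by rewrite addnS s1 //; lia.
exists N, P, (s N); split => // z hz.
rewrite -(sN z hz) /s; have : f z <= f (z + P) by apply: nd; lia.
lia.
Qed.

Section Constr.
Variable f : nat -> nat.
Hypothesis nd : nondecreasing_fun f.
Variables N0 p' q : nat.
Local Notation p := p'.+1.
Hypothesis hf : forall z, N0 <= z -> f (z + p) = f z + q.

Definition st j := if j < N0 then j else N0 + (j - N0) %% p.
Definition nxt i := if i.+1 < N0 + p then i.+1 else N0.
Definition dl i := f i.+1 - f i.

Lemma st_lt j : st j < (N0 + p').+1.
Proof. rewrite /st; case: ifP => h; first lia. have := ltn_pmod (j - N0) (ltn0Sn p'); lia. Qed.

Lemma st0 : st 0 = 0.
Proof. rewrite /st; case: N0 => //=. Qed.

Lemma nxt_st j : nxt (st j) = st j.+1.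
Proof.
rewrite /nxt /st; case: (ltnP j.+1 N0) => h1.
  have h2 : j < N0 by lia.
  rewrite h2 ifT //; lia.
case: (ltnP j N0) => h2.
  have e : j.+1 = N0 by lia.
  by rewrite e subnn mod0n addn0; case: ifP.
have -> : j.+1 - N0 = (j - N0) + 1 by lia.
rewrite -modnDml; have := ltn_pmod (j - N0) (ltn0Sn p'); move: ((j - N0) %% p) => r hr.
case: (ltnP (N0 + r).+1 (N0 + p)) => h3.
  by rewrite modn_small; lia.
have -> : r + 1 = p by lia.
by rewrite modnn addn0.
Qed.

Lemma dlP j : dl (st j) = dl j.
Proof.
rewrite /dl /st; case: ifP => // h.
have hj : N0 <= j by lia.
have e : j = N0 + (j - N0) %% p + (j - N0) %/ p * p.
  have := divn_eq (j - N0) p; lia.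
move: (EP_iter hf (z := N0 + (j - N0) %% p) ((j - N0) %/ p) ltac:(lia)).
move: (EP_iter hf (z := (N0 + (j - N0) %% p).+1) ((j - N0) %/ p) ltac:(lia)).
rewrite -e; have -> : (N0 + (j - N0) %% p).+1 + (j - N0) %/ p * p = j.+1 by lia.
lia.
Qed.

Definition K1 := N0 + p'.
Definition sp : finType := option (option (option 'I_K1.+1)).
Definition sX : sp := None.
Definition sY : sp := Some None.
Definition sL : sp := Some (Some None).
Definition sS (i : 'I_K1.+1) : sp := Some (Some (Some i)).

Definition rL : {ffun sp -> nat} * {ffun sp -> nat} :=
  ([ffun s => nat_of_bool (s == sL)],
   [ffun s => if s == sY then f 0 else nat_of_bool (s == sS (inord 0))]).
Definition rS (i : 'I_K1.+1) : {ffun sp -> nat} * {ffun sp -> nat} :=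
  ([ffun s => nat_of_bool ((s == sS i) || (s == sX))],
   [ffun s => if s == sY then dl i else nat_of_bool (s == sS (inord (nxt i)))]).

Definition Cn : crn := CRN (rL :: map rS (enum 'I_K1.+1)) sX sY sL.

Definition Bc x j : config Cn :=
  [ffun s => if s == sX then x - j else if s == sY then f j else nat_of_bool (s == sS (inord (st j)))].

Definition Inv x (c : config Cn) := c = init_config Cn x \/ exists2 j, j <= x & c = Bc x j.

Lemma rxnP r : r \in reactions Cn -> r = rL \/ exists i, r = rS i.
Proof.
rewrite /= inE => /orP [/eqP ->|/mapP [i _ ->]]; [by left | by right; exists i].
Qed.

Lemma inordK' j : nat_of_ord (@inord K1 (st j)) = st j.
Proof. by rewrite inordK // st_lt. Qed.

Lemma Inv_step x (c d : config Cn) : Inv x c -> step c d -> Inv x d.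
Proof.
move=> hc [r /rxnP hr [app ->]].
case: hc hr app => [->|[j hj ->]] [->|[i ->]] /forallP app.
- right; exists 0 => //.
  apply/ffunP => s; rewrite !ffunE st0; case: s => [[[k|]|]|] //=.
  by rewrite subn0 addn0.
- by have := app (sS i); rewrite !ffunE /= eqxx.
- by have := app sL; rewrite !ffunE.
- have h1 := app (sS i); have h2 := app sX.
  move: h1 h2; rewrite !ffunE /= eqxx /= => h1 h2.
  have ei : i = inord (st j) by move: h1; rewrite lt0b => /eqP [].
  right; exists j.+1; first by lia.
  apply/ffunP => s; rewrite !ffunE; case: s => [[[k|]|]|] /=.
  + by rewrite orbF ei inordK' nxt_st subnn.
  + by [].
  + by rewrite ei inordK' dlP /dl; have := nd (leqnSn j); lia.
  + by lia.
Qed.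

Lemma Inv_reach x (c d : config Cn) : reachable c d -> Inv x c -> Inv x d.
Proof. elim=> // a b e st _ IH h; apply: IH; exact: Inv_step h st. Qed.

Lemma no_step x (d : config Cn) : ~ step (Bc x x) d.
Proof.
case=> r /rxnP hr [/forallP app _]; case: hr app => [->|[i ->]] app.
  by have := app sL; rewrite !ffunE.
by have := app sX; rewrite !ffunE /= subnn.
Qed.

Lemma Bc_stable x : stable_config (Bc x x).
Proof.
move=> d h.
have : forall c' d' : config Cn, reachable c' d' -> c' = Bc x x -> d' = c'.
  move=> c' d'; case => // a b e st' _ E; rewrite E in st'; exfalso; exact: no_step st'.
by move=> /(_ _ _ h erefl) ->.
Qed.

Lemma Bc_reach x j : j <= x -> reachable (Bc x j) (Bc x x).
Proof.
move=> hj; move: {2}(x - j) (erefl (x - j)) => k; elim: k j hj => [|k IH] j hj e.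
  have -> : j = x by lia.
  exact: reach_refl.
apply: (reach_step (d := Bc x j.+1)); last by apply: IH; lia.
exists (rS (inord (st j))).
  by rewrite /= inE; apply/orP; right; apply: map_f; rewrite mem_enum.
split.
  apply/forallP => s; rewrite !ffunE; case: s => [[[k'|]|]|] //=; last by lia.
  by rewrite orbF; case: (_ == _).
apply/ffunP => s; rewrite !ffunE; case: s => [[[k'|]|]|] /=.
+ by rewrite orbF inordK' nxt_st subnn.
+ by [].
+ by rewrite inordK' dlP /dl; have := nd (leqnSn j); lia.
+ by lia.
Qed.

Lemma Cn_computes : stably_computes Cn f.
Proof.
move=> x c hc.
have := Inv_reach (x := x) hc (or_introl erefl); case=> [->|[j hj ->]].
  exists (Bc x x); split => //; last by rewrite ffunE.
    apply: (reach_step (d := Bc x 0)); last exact: Bc_reach.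
    exists rL; first by rewrite /= inE eqxx.
    split; first by apply/forallP => s; rewrite !ffunE; case: s => [[[k|]|]|].
    apply/ffunP => s; rewrite !ffunE st0; case: s => [[[k|]|]|] //=.
    by rewrite subn0 addn0.
  exact: Bc_stable.
exists (Bc x x); split; [exact: Bc_reach | exact: Bc_stable | by rewrite ffunE].
Qed.

Lemma Cn_ok : obliviously_computable f.
Proof.
exists Cn; split; [by [] | | exact: Cn_computes].
by move=> r /rxnP [->|[i ->]]; rewrite ffunE.
Qed.

End Constr.

Theorem theorem8 (f : nat -> nat) :
  obliviously_computable f <-> semilinear_fun f /\ nondecreasing_fun f.
Proof.
split.
  case=> C [wf oo sc]; split; [exact: EP_semilinear (fwd_EP oo sc) | exact: (@f_nondec C oo f sc)].
case=> sl nd; have [N [p [q [pp hf]]]] := sl_EP sl nd.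
case: p pp hf => // p' _ hf.
exact: (@Cn_ok f nd N p' q hf).
Qed.
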